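(* The graph $L_{6,1}$ has a perfect partition; that is, the set of all $265$ derangements of $\{1,\dots,6\}$ (equivalently, all $6\times 6$ permutation matrices with zero diagonal) can be partitioned into subsets each of which consists of $5$ permutation matrices summing to $J_6-I_6$.
   Context: $L_{n,1}=K_{n,n}-nK_{1,1}$ is the complete bipartite graph $K_{n,n}$ with a perfect matching removed; its biadjacency matrix is $J_n-I_n$, where $J_n$ is the all-ones $n\times n$ matrix. Its perfect matchings correspond exactly to derangements of $\{1,\dots,n\}$ (permutation matrices $P$ with $P\le J_n-I_n$ entrywise). A regular bipartite graph $G$ has a perfect partition if its set of perfect matchings can be partitioned into parts each of which is a $1$-factorization of $G$ (a set of pairwise edge-disjoint perfect matchings whose union is $G$); in matrix language, the set of permutation matrices $P\le A(G)$ can be partitioned into subsets each summing to $A(G)$. *)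

(* Defs.v *)
From mathcomp Require Import all_boot all_fingroup.
Set Implicit Arguments. Unset Strict Implicit. Unset Printing Implicit Defensive.

(* A bipartite graph on colour classes 'I_n x 'I_n given by its biadjacency
   relation A (A i j <=> edge between row-vertex i and column-vertex j). *)

(* Biadjacency relation of L_{n,1} = K_{n,n} - n K_{1,1}: matrix J_n - I_n. *)
Definition L1rel (n : nat) : rel 'I_n := fun i j => i != j.

Definition perfect_matchings (n : nat) (A : rel 'I_n) : {set {perm 'I_n}} :=
  [set s : {perm 'I_n} | [forall i, A i (s i)]].

Definition one_factorization (n : nat) (A : rel 'I_n) (F : {set {perm 'I_n}}) : Prop :=
  [/\ F \subset perfect_matchings A,
      (forall s t, s \in F -> t \in F -> s != t -> forall i, s i != t i)
    & (forall i j, A i j -> exists2 s, s \in F & s i = j)].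

Definition has_perfect_partition (n : nat) (A : rel 'I_n) : Prop :=
  exists P : {set {set {perm 'I_n}}},
    partition P (perfect_matchings A) /\
    (forall F, F \in P -> one_factorization A F).

Arguments L1rel n : clear implicits.

(* Main.v *)
Require Import Defs.
From mathcomp Require Import all_boot all_fingroup.
Set Implicit Arguments. Unset Strict Implicit. Unset Printing Implicit Defensive.

Definition R : seq (seq (seq nat)) := [::
  [:: [:: 1; 2; 3; 4; 5; 0]; [:: 2; 4; 1; 5; 0; 3]; [:: 3; 0; 5; 1; 2; 4]; [:: 4; 5; 0; 2; 3; 1]; [:: 5; 3; 4; 0; 1; 2]];
  [:: [:: 1; 3; 0; 5; 2; 4]; [:: 2; 4; 5; 1; 0; 3]; [:: 3; 0; 4; 2; 5; 1]; [:: 4; 5; 1; 0; 3; 2]; [:: 5; 2; 3; 4; 1; 0]];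
  [:: [:: 1; 3; 4; 5; 2; 0]; [:: 2; 5; 3; 0; 1; 4]; [:: 3; 4; 5; 2; 0; 1]; [:: 4; 2; 0; 1; 5; 3]; [:: 5; 0; 1; 4; 3; 2]];
  [:: [:: 1; 4; 0; 2; 5; 3]; [:: 2; 0; 1; 5; 3; 4]; [:: 3; 2; 5; 4; 0; 1]; [:: 4; 5; 3; 0; 1; 2]; [:: 5; 3; 4; 1; 2; 0]];
  [:: [:: 1; 0; 4; 2; 5; 3]; [:: 2; 5; 1; 0; 3; 4]; [:: 3; 4; 5; 1; 2; 0]; [:: 4; 3; 0; 5; 1; 2]; [:: 5; 2; 3; 4; 0; 1]];
  [:: [:: 1; 5; 3; 0; 2; 4]; [:: 2; 0; 5; 4; 1; 3]; [:: 3; 2; 4; 1; 5; 0]; [:: 4; 3; 1; 5; 0; 2]; [:: 5; 4; 0; 2; 3; 1]];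
  [:: [:: 1; 2; 4; 5; 0; 3]; [:: 2; 0; 5; 4; 3; 1]; [:: 3; 4; 0; 1; 5; 2]; [:: 4; 5; 3; 2; 1; 0]; [:: 5; 3; 1; 0; 2; 4]];
  [:: [:: 1; 4; 3; 2; 5; 0]; [:: 2; 3; 1; 5; 0; 4]; [:: 3; 5; 0; 4; 1; 2]; [:: 4; 2; 5; 0; 3; 1]; [:: 5; 0; 4; 1; 2; 3]];
  [:: [:: 1; 3; 4; 2; 5; 0]; [:: 2; 5; 0; 1; 3; 4]; [:: 3; 4; 5; 0; 1; 2]; [:: 4; 2; 3; 5; 0; 1]; [:: 5; 0; 1; 4; 2; 3]];
  [:: [:: 1; 2; 5; 0; 3; 4]; [:: 2; 0; 4; 1; 5; 3]; [:: 3; 5; 1; 4; 0; 2]; [:: 4; 3; 0; 5; 2; 1]; [:: 5; 4; 3; 2; 1; 0]];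
  [:: [:: 1; 5; 3; 4; 0; 2]; [:: 2; 0; 5; 1; 3; 4]; [:: 3; 4; 1; 2; 5; 0]; [:: 4; 2; 0; 5; 1; 3]; [:: 5; 3; 4; 0; 2; 1]];
  [:: [:: 1; 5; 0; 4; 2; 3]; [:: 2; 4; 5; 0; 3; 1]; [:: 3; 0; 1; 2; 5; 4]; [:: 4; 2; 3; 5; 1; 0]; [:: 5; 3; 4; 1; 0; 2]];
  [:: [:: 1; 2; 4; 0; 5; 3]; [:: 2; 5; 0; 4; 3; 1]; [:: 3; 4; 5; 1; 0; 2]; [:: 4; 3; 1; 5; 2; 0]; [:: 5; 0; 3; 2; 1; 4]];
  [:: [:: 1; 0; 4; 5; 3; 2]; [:: 2; 5; 3; 1; 0; 4]; [:: 3; 4; 5; 2; 1; 0]; [:: 4; 2; 1; 0; 5; 3]; [:: 5; 3; 0; 4; 2; 1]];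
  [:: [:: 1; 5; 0; 4; 3; 2]; [:: 2; 4; 1; 0; 5; 3]; [:: 3; 2; 5; 1; 0; 4]; [:: 4; 0; 3; 5; 2; 1]; [:: 5; 3; 4; 2; 1; 0]];
  [:: [:: 1; 3; 4; 0; 5; 2]; [:: 2; 4; 5; 1; 3; 0]; [:: 3; 2; 0; 5; 1; 4]; [:: 4; 5; 1; 2; 0; 3]; [:: 5; 0; 3; 4; 2; 1]];
  [:: [:: 1; 0; 5; 4; 3; 2]; [:: 2; 4; 3; 1; 5; 0]; [:: 3; 5; 4; 0; 2; 1]; [:: 4; 2; 1; 5; 0; 3]; [:: 5; 3; 0; 2; 1; 4]];
  [:: [:: 1; 4; 5; 2; 0; 3]; [:: 2; 0; 4; 5; 3; 1]; [:: 3; 5; 1; 0; 2; 4]; [:: 4; 2; 3; 1; 5; 0]; [:: 5; 3; 0; 4; 1; 2]];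
  [:: [:: 1; 3; 5; 2; 0; 4]; [:: 2; 0; 1; 4; 5; 3]; [:: 3; 5; 4; 0; 1; 2]; [:: 4; 2; 0; 5; 3; 1]; [:: 5; 4; 3; 1; 2; 0]];
  [:: [:: 1; 2; 0; 5; 3; 4]; [:: 2; 3; 4; 1; 5; 0]; [:: 3; 0; 5; 4; 1; 2]; [:: 4; 5; 1; 0; 2; 3]; [:: 5; 4; 3; 2; 0; 1]];
  [:: [:: 1; 4; 5; 0; 2; 3]; [:: 2; 5; 3; 4; 0; 1]; [:: 3; 0; 4; 5; 1; 2]; [:: 4; 3; 1; 2; 5; 0]; [:: 5; 2; 0; 1; 3; 4]];
  [:: [:: 1; 2; 5; 4; 0; 3]; [:: 2; 3; 4; 0; 5; 1]; [:: 3; 4; 0; 5; 1; 2]; [:: 4; 5; 1; 2; 3; 0]; [:: 5; 0; 3; 1; 2; 4]];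
  [:: [:: 1; 5; 4; 0; 3; 2]; [:: 2; 0; 3; 5; 1; 4]; [:: 3; 4; 0; 2; 5; 1]; [:: 4; 2; 5; 1; 0; 3]; [:: 5; 3; 1; 4; 2; 0]];
  [:: [:: 1; 0; 3; 5; 2; 4]; [:: 2; 5; 4; 1; 3; 0]; [:: 3; 4; 1; 0; 5; 2]; [:: 4; 3; 5; 2; 0; 1]; [:: 5; 2; 0; 4; 1; 3]];
  [:: [:: 1; 0; 4; 5; 2; 3]; [:: 2; 5; 1; 4; 3; 0]; [:: 3; 2; 5; 0; 1; 4]; [:: 4; 3; 0; 2; 5; 1]; [:: 5; 4; 3; 1; 0; 2]];
  [:: [:: 1; 4; 5; 2; 3; 0]; [:: 2; 3; 0; 4; 5; 1]; [:: 3; 0; 1; 5; 2; 4]; [:: 4; 5; 3; 1; 0; 2]; [:: 5; 2; 4; 0; 1; 3]];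
  [:: [:: 1; 2; 0; 4; 5; 3]; [:: 2; 4; 3; 5; 0; 1]; [:: 3; 5; 4; 1; 2; 0]; [:: 4; 3; 5; 0; 1; 2]; [:: 5; 0; 1; 2; 3; 4]];
  [:: [:: 1; 3; 0; 4; 5; 2]; [:: 2; 4; 5; 0; 1; 3]; [:: 3; 2; 1; 5; 0; 4]; [:: 4; 5; 3; 1; 2; 0]; [:: 5; 0; 4; 2; 3; 1]];
  [:: [:: 1; 2; 3; 5; 0; 4]; [:: 2; 5; 4; 0; 1; 3]; [:: 3; 0; 5; 4; 2; 1]; [:: 4; 3; 0; 1; 5; 2]; [:: 5; 4; 1; 2; 3; 0]];
  [:: [:: 1; 5; 4; 0; 2; 3]; [:: 2; 4; 0; 5; 3; 1]; [:: 3; 0; 1; 4; 5; 2]; [:: 4; 3; 5; 2; 1; 0]; [:: 5; 2; 3; 1; 0; 4]];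
  [:: [:: 1; 4; 3; 5; 2; 0]; [:: 2; 5; 4; 1; 0; 3]; [:: 3; 0; 5; 2; 1; 4]; [:: 4; 3; 1; 0; 5; 2]; [:: 5; 2; 0; 4; 3; 1]];
  [:: [:: 1; 4; 3; 5; 0; 2]; [:: 2; 5; 4; 0; 3; 1]; [:: 3; 2; 5; 4; 1; 0]; [:: 4; 0; 1; 2; 5; 3]; [:: 5; 3; 0; 1; 2; 4]];
  [:: [:: 1; 4; 5; 0; 3; 2]; [:: 2; 3; 4; 5; 1; 0]; [:: 3; 5; 0; 1; 2; 4]; [:: 4; 0; 3; 2; 5; 1]; [:: 5; 2; 1; 4; 0; 3]];
  [:: [:: 1; 3; 5; 4; 0; 2]; [:: 2; 4; 3; 0; 5; 1]; [:: 3; 5; 0; 2; 1; 4]; [:: 4; 0; 1; 5; 2; 3]; [:: 5; 2; 4; 1; 3; 0]];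
  [:: [:: 1; 5; 4; 2; 0; 3]; [:: 2; 4; 1; 5; 3; 0]; [:: 3; 2; 0; 1; 5; 4]; [:: 4; 3; 5; 0; 2; 1]; [:: 5; 0; 3; 4; 1; 2]];
  [:: [:: 1; 3; 0; 2; 5; 4]; [:: 2; 5; 1; 4; 0; 3]; [:: 3; 2; 4; 5; 1; 0]; [:: 4; 0; 5; 1; 3; 2]; [:: 5; 4; 3; 0; 2; 1]];
  [:: [:: 1; 3; 5; 0; 2; 4]; [:: 2; 0; 3; 4; 5; 1]; [:: 3; 5; 4; 1; 0; 2]; [:: 4; 2; 1; 5; 3; 0]; [:: 5; 4; 0; 2; 1; 3]];
  [:: [:: 1; 0; 5; 4; 2; 3]; [:: 2; 4; 3; 5; 1; 0]; [:: 3; 2; 1; 0; 5; 4]; [:: 4; 5; 0; 1; 3; 2]; [:: 5; 3; 4; 2; 0; 1]];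
  [:: [:: 1; 4; 0; 5; 3; 2]; [:: 2; 5; 3; 4; 1; 0]; [:: 3; 2; 4; 0; 5; 1]; [:: 4; 0; 5; 1; 2; 3]; [:: 5; 3; 1; 2; 0; 4]];
  [:: [:: 1; 2; 4; 5; 3; 0]; [:: 2; 3; 5; 0; 1; 4]; [:: 3; 5; 0; 4; 2; 1]; [:: 4; 0; 3; 1; 5; 2]; [:: 5; 4; 1; 2; 0; 3]];
  [:: [:: 1; 5; 0; 2; 3; 4]; [:: 2; 3; 1; 4; 5; 0]; [:: 3; 4; 5; 0; 2; 1]; [:: 4; 0; 3; 5; 1; 2]; [:: 5; 2; 4; 1; 0; 3]];
  [:: [:: 1; 0; 5; 2; 3; 4]; [:: 2; 3; 4; 5; 0; 1]; [:: 3; 2; 1; 4; 5; 0]; [:: 4; 5; 0; 1; 2; 3]; [:: 5; 4; 3; 0; 1; 2]];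
  [:: [:: 1; 3; 4; 5; 0; 2]; [:: 2; 4; 0; 1; 5; 3]; [:: 3; 5; 1; 4; 2; 0]; [:: 4; 0; 5; 2; 3; 1]; [:: 5; 2; 3; 0; 1; 4]];
  [:: [:: 1; 4; 3; 0; 5; 2]; [:: 2; 3; 5; 1; 0; 4]; [:: 3; 0; 4; 5; 2; 1]; [:: 4; 5; 0; 2; 1; 3]; [:: 5; 2; 1; 4; 3; 0]];
  [:: [:: 1; 5; 3; 2; 0; 4]; [:: 2; 0; 4; 5; 1; 3]; [:: 3; 2; 0; 4; 5; 1]; [:: 4; 3; 5; 1; 2; 0]; [:: 5; 4; 1; 0; 3; 2]];
  [:: [:: 1; 0; 3; 2; 5; 4]; [:: 2; 5; 0; 4; 1; 3]; [:: 3; 4; 1; 5; 2; 0]; [:: 4; 3; 5; 1; 0; 2]; [:: 5; 2; 4; 0; 3; 1]];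
  [:: [:: 1; 0; 3; 4; 5; 2]; [:: 2; 3; 0; 5; 1; 4]; [:: 3; 5; 4; 2; 0; 1]; [:: 4; 2; 5; 1; 3; 0]; [:: 5; 4; 1; 0; 2; 3]];
  [:: [:: 1; 2; 3; 0; 5; 4]; [:: 2; 3; 5; 4; 0; 1]; [:: 3; 5; 4; 2; 1; 0]; [:: 4; 0; 1; 5; 3; 2]; [:: 5; 4; 0; 1; 2; 3]];
  [:: [:: 1; 2; 5; 4; 3; 0]; [:: 2; 3; 0; 1; 5; 4]; [:: 3; 4; 1; 5; 0; 2]; [:: 4; 5; 3; 0; 2; 1]; [:: 5; 0; 4; 2; 1; 3]];
  [:: [:: 1; 5; 3; 4; 2; 0]; [:: 2; 3; 1; 0; 5; 4]; [:: 3; 2; 4; 5; 0; 1]; [:: 4; 0; 5; 2; 1; 3]; [:: 5; 4; 0; 1; 3; 2]];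
  [:: [:: 1; 5; 4; 2; 3; 0]; [:: 2; 0; 3; 1; 5; 4]; [:: 3; 4; 0; 5; 2; 1]; [:: 4; 2; 5; 0; 1; 3]; [:: 5; 3; 1; 4; 0; 2]];
  [:: [:: 1; 3; 5; 4; 2; 0]; [:: 2; 4; 0; 5; 1; 3]; [:: 3; 0; 4; 1; 5; 2]; [:: 4; 5; 3; 2; 0; 1]; [:: 5; 2; 1; 0; 3; 4]];
  [:: [:: 1; 4; 0; 5; 2; 3]; [:: 2; 3; 5; 4; 1; 0]; [:: 3; 5; 1; 2; 0; 4]; [:: 4; 2; 3; 0; 5; 1]; [:: 5; 0; 4; 1; 3; 2]]].

Definition rep (k : nat) : seq (seq nat) := nth [::] R k.

Definition good_list (l : seq nat) : bool :=
  [&& size l == 6, all (fun a => a < 6) l, uniq l &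
      all (fun i => nth 0 l i != i) (iota 0 6)].

Definition Pc (l : seq nat) : bool :=
  good_list l ==> has (fun k => l \in rep k) (iota 0 53).

Fixpoint chk (n : nat) (pre : seq nat) : bool :=
  if n is n'.+1 then all (fun a => chk n' (rcons pre a)) (iota 0 6) else Pc pre.

Lemma chkP n pre : chk n pre -> forall l, size l = n -> all (fun a => a < 6) l ->
  Pc (pre ++ l).
Proof.
elim: n pre => [|n IH] pre.
  by move=> h [|//] _ _; rewrite cats0.
move=> h [//|a l] [sl] /andP[ha hl].
rewrite -cat_rcons; apply: IH => //.
have hS : chk n.+1 pre = all (fun a => chk n (rcons pre a)) (iota 0 6) by [].
by move: h; rewrite hS => /allP; apply; rewrite mem_iota.
Qed.

Lemma C1 : all (fun B => all good_list B) R. Proof. by vm_compute. Qed.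
Lemma C2 : all (fun k1 => all (fun k2 =>
  (k1 != k2) ==> all (fun l => l \notin rep k2) (rep k1)) (iota 0 53)) (iota 0 53).
Proof. by vm_compute. Qed.
Lemma C3 : all (fun k => all (fun l1 => all (fun l2 => (l1 != l2) ==>
  all (fun i => nth 0 l1 i != nth 0 l2 i) (iota 0 6)) (rep k)) (rep k)) (iota 0 53).
Proof. by vm_compute. Qed.
Lemma C4 : all (fun k => all (fun i => all (fun j => (i != j) ==>
  has (fun l => nth 0 l i == j) (rep k)) (iota 0 6)) (iota 0 6)) (iota 0 53).
Proof. by vm_compute. Qed.
Lemma C5 : chk 6 [::]. Proof. by vm_compute. Qed.
Lemma sizeR : size R = 53. Proof. by []. Qed.

Definition code (s : {perm 'I_6}) : seq nat :=
  map (fun i => val (s (inord i))) (iota 0 6).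

Lemma size_code s : size (code s) = 6.
Proof. by rewrite size_map size_iota. Qed.

Lemma nth_code s i : i < 6 -> nth 0 (code s) i = val (s (inord i)).
Proof. by move=> hi; rewrite (nth_map 0) ?size_iota // nth_iota. Qed.

Lemma code_inj s t : code s = code t -> s = t.
Proof.
move=> e; apply/permP => i; apply: val_inj.
have := congr1 (fun l => nth 0 l i) e; rewrite /= !nth_code //.
by rewrite inord_val.
Qed.

Lemma rep_good k l : l \in rep k -> good_list l.
Proof.
move=> hl; case hk : (k < size R); last first.
  by move: hl; rewrite /rep nth_default // leqNgt hk.
have /allP h := C1; have /allP := h _ (mem_nth [::] hk); exact.
Qed.

Lemma exists_perm l : good_list l -> exists s, code s = l.
Proof.
case/and4P => /eqP sl /all_nthP hlt hu _.
pose f := fun i : 'I_6 => (inord (nth 0 l i) : 'I_6).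
have finj : injective f.
  move=> i j /(congr1 val); rewrite /f /= !inordK; last 2 first.
  - by apply: hlt; rewrite sl.
  - by apply: hlt; rewrite sl.
  move/eqP; rewrite nth_uniq ?sl // => /eqP e; exact: val_inj.
exists (perm finj); apply: (@eq_from_nth _ 0); first by rewrite size_code sl.
move=> i; rewrite size_code => hi; rewrite nth_code // permE /f /= inordK //.
  by rewrite inordK.
by apply: hlt; rewrite sl inordK.
Qed.

Lemma good_code (s : {perm 'I_6}) : (forall x, s x != x) -> good_list (code s).
Proof.
move=> hs; apply/and4P; split.
- by rewrite size_code.
- by apply/allP => a /mapP [x _ ->]; apply: ltn_ord.
- rewrite map_inj_in_uniq ?iota_uniq // => a b; rewrite !mem_iota /= => ha hb.
  move/val_inj/perm_inj/(congr1 val) => /=; rewrite !inordK //.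
- apply/allP => i; rewrite mem_iota /= => hi; rewrite nth_code //.
  apply/eqP => e; move: (hs (inord i)) => /eqP; apply; apply: val_inj.
  by rewrite /= e inordK.
Qed.

Lemma code_der (s : {perm 'I_6}) : good_list (code s) -> forall x, s x != x.
Proof.
case/and4P => _ _ _ /allP h x; move: (h (val x)); rewrite mem_iota /= ltn_ord.
rewrite nth_code // inord_val => /(_ isT) hn; apply/eqP => e.
by rewrite e eqxx in hn.
Qed.

Lemma kin (k : 'I_53) : val k \in iota 0 53.
Proof. by rewrite mem_iota ltn_ord. Qed.

Definition blockset (k : 'I_53) : {set {perm 'I_6}} := [set s | code s \in rep k].

Theorem theorem2p1 : has_perfect_partition (L1rel 6).
Proof.
exists [set blockset k | k : 'I_53]; split.
  apply/and3P; split.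
  - apply/eqP/setP => s; rewrite /perfect_matchings inE.
    apply/bigcupP/idP.
      case=> B /imsetP [k _ ->]; rewrite inE => /rep_good /code_der h.
      by apply/forallP => x; rewrite /L1rel eq_sym h.
    move=> /forallP hs.
    have hd : forall x, s x != x by move=> x; rewrite eq_sym; apply: hs.
    have := chkP C5 (size_code s).
    have ha : all (fun a => a < 6) (code s) by case/and4P: (good_code hd).
    move=> /(_ ha); rewrite /Pc cat0s (good_code hd) implyTb => /hasP [k hk hin].
    have hk' : k < 53 by rewrite mem_iota in hk.
    by exists (blockset (Ordinal hk')); [apply: imset_f | rewrite inE].
  - apply/trivIsetP => A B /imsetP[k1 _ ->] /imsetP[k2 _ ->] neq.
    case: (eqVneq k1 k2) => [e|ne]; first by rewrite e eqxx in neq.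
    rewrite -setI_eq0; apply/eqP/setP => s; rewrite !inE; apply/negP => /andP[h1 h2].
    have ne' : val k1 != val k2 := ne.
    move: C2 => /allP /(_ _ (kin k1)) /allP /(_ _ (kin k2)); rewrite ne' implyTb => /allP /(_ _ h1).
    by rewrite h2.
  - apply/imsetP => [[k _ e]].
    move: C4 => /allP /(_ _ (kin k)) /allP /(_ 0 isT) /allP /(_ 1 isT) /hasP [l hl _].
    have [s hs] := exists_perm (rep_good hl).
    have : s \in blockset k by rewrite inE hs.
    by rewrite -e inE.
move=> F /imsetP [k _ ->]; split.
- apply/subsetP => s; rewrite !inE => /rep_good /code_der h.
  by apply/forallP => x; rewrite /L1rel eq_sym h.
- move=> s t; rewrite !inE => hs ht nst i; apply/eqP => e.
  have ne : code s != code t by apply/eqP => /code_inj est; rewrite est eqxx in nst.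
  move: C3 => /allP /(_ _ (kin k)) /allP /(_ _ hs) /allP /(_ _ ht); rewrite ne implyTb.
  move=> /allP /(_ (val i)); rewrite mem_iota ltn_ord => /(_ isT).
  have ei : inord (val i) = i :> 'I_6 by exact: inord_val.
  by rewrite !nth_code ?ltn_ord // ei e eqxx.
- move=> i j hij.
  have hv : val i != val j by [].
  move: C4 => /allP /(_ _ (kin k)) /allP /(_ (val i)); rewrite mem_iota ltn_ord => /(_ isT).
  move=> /allP /(_ (val j)); rewrite mem_iota ltn_ord => /(_ isT); rewrite hv implyTb => /hasP [l hl /eqP hn].
  have [s hs] := exists_perm (rep_good hl).
  exists s; first by rewrite inE hs.
  have ei : inord (val i) = i :> 'I_6 by exact: inord_val.
  by apply: val_inj; rewrite -hn -hs nth_code ?ltn_ord // ei.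
Qed.
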